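(* For every integer $d\ge 2$ there exist a constant $c_d>0$ (one may take $c_d=(5d^{d/2})^{-1}$) and $p_0(d)$ such that for every prime $p\ge p_0(d)$ there is a set $B\subset\mathbb{F}_p^d$ with $|B|\ge c_d\,p^{\frac{d+2}{2}}$ such that $x\cdot y\ne 0$ for all $x,y\in B$ (including $x=y$).
   Context: For $u,v\in\mathbb{F}_p^d$, $u\cdot v=\sum_{i=1}^d u_iv_i$ computed in $\mathbb{F}_p$. *)

(* Defs.v *)
From HB Require Import structures.
From mathcomp Require Import all_boot all_order all_algebra.
Set Implicit Arguments. Unset Strict Implicit. Unset Printing Implicit Defensive.
Import GRing.Theory.
Local Open Scope ring_scope.

Definition dotp (p d : nat) (u v : 'rV['F_p]_d) : 'F_p :=
  (\sum_(i < d) (u ord0 i * v ord0 i)%R)%R.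

(* Main.v *)
Require Import Defs.
From HB Require Import structures.
From mathcomp Require Import all_boot all_order all_algebra.
From Stdlib Require Import Reals.
From Stdlib Require Import Lra Lia.
From mathcomp Require Import zify.
Import ssrnat.
Import GRing.Theory.

Section Helpers.
Local Open Scope nat_scope.
Lemma sqrt_lem p d : (1 <= d)%N -> (d < p)%N -> exists m, (0 < m)%N /\ (d * m * m < p)%N /\ (p <= 4 * d * m * m)%N.
Proof.
move=> H1 H2. exists (Nat.sqrt ((p-1) %/ d)).
have := Nat.sqrt_specif ((p-1) %/ d). set s := Nat.sqrt _. move=> [A B].
have C: (0 < (p-1) %/ d)%N by rewrite divn_gt0 //; lia.
have D: (0 < s)%N. case: (posnP s) => // E. rewrite E in B. lia.
have E1 : (s * s * d <= p - 1)%N. rewrite -leq_divRL //. lia.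
have E2 : (p - 1 < s.+1 * s.+1 * d)%N. rewrite -ltn_divLR //. lia.
split => //. split; nia.
Qed.

Lemma tele (t : nat -> nat) P :
  (forall k, 1 < k -> t k * (k * k) <= P) ->
  forall N, 4 * N * (\sum_(k < N.+1) (if 1 < k then t k else 0)) <= (3 * N - 4) * P.
Proof.
move=> Ht; elim=> [|N IH]; first by rewrite big_ord_recr big_ord0.
rewrite big_ord_recr /=.
case: N IH => [|N] IH.
  by rewrite big_ord_recr big_ord0.
have HT := Ht N.+2 isT.
case: N IH HT => [|N] IH HT.
  rewrite !big_ord_recr big_ord0 /=. lia.
rewrite /=.
set s := \sum_(_ < _) _ in IH *.
have H1 : 4 * N.+2 * (N.+3 * (s + t N.+3)) = N.+3 * (4 * N.+2 * s) + 4 * N.+2 * N.+3 * t N.+3 by nia.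
have H2 : N.+3 * (4 * N.+2 * s) <= N.+3 * ((3 * N.+2 - 4) * P) by rewrite leq_mul2l IH orbT.
rewrite -(leq_pmul2l (isT : 0 < N.+2)).
nia.
Qed.

Lemma tele2 (t : nat -> nat) P m :
  (forall k, 1 < k -> t k * (k * k) <= P) ->
  4 * (\sum_(k < m.+1) (if 1 < k then t k else 0)) <= 3 * P.
Proof.
move=> Ht; have := @tele t P Ht m.
case: m => [|m] H.
  by rewrite big_ord_recr big_ord0.
rewrite -(leq_pmul2l (isT : 0 < m.+1)). nia.
Qed.

Lemma count_mult m k : 0 < k -> \sum_(i < m) (k %| i.+1) = m %/ k.
Proof.
move=> k0; elim: m => [|m IH]; first by rewrite big_ord0 div0n.
by rewrite big_ord_recr /= IH divnS // addnC.
Qed.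

End Helpers.
Section Count.
Variables (d m : nat) (i0 i1 : 'I_d).
Hypothesis i01 : i0 != i1.

Definition Tk k := [set f : {ffun 'I_d -> 'I_m} | (k %| (f i0).+1) && (k %| (f i1).+1)].

Lemma card_mult k : 0 < k -> #|[pred a : 'I_m | k %| a.+1]| = m %/ k.
Proof.
move=> k0; rewrite -sum1_card big_mkcond /= -(@count_mult m k k0).
by apply: eq_bigr => i _; rewrite inE; case: (k %| i.+1).
Qed.

Lemma cardT k : 0 < k -> #|Tk k| * (k * k) <= m ^ d.
Proof.
move=> k0.
pose F := fun i : 'I_d => if (i == i0) || (i == i1) then [pred a : 'I_m | k %| a.+1] else predT.
have -> : #|Tk k| = #|finfun.family F|.
  apply: eq_card => f; rewrite inE; apply/andP/familyP.
    move=> [h0 h1] i; rewrite /F; case: ifP => // /orP [] /eqP -> //.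
  move=> h; split.
    by have := h i0; rewrite /F eqxx.
  by have := h i1; rewrite /F eqxx orbT.
rewrite card_family foldrE big_map big_enum /=.
pose w := fun i : 'I_d => if (i == i0) || (i == i1) then k else 1.
have -> : k * k = \prod_(i < d) w i.
  rewrite (bigD1 i0) // (bigD1 i1) /=; last by rewrite eq_sym.
  rewrite big1 ?muln1 /w.
    by rewrite eqxx /= eqxx orbT.
  by move=> i /andP [] /negbTE -> /negbTE ->.
rewrite -big_split /=.
have -> : m ^ d = \prod_(i < d) m by rewrite prod_nat_const card_ord.
apply: leq_prod => i _; rewrite /F /w; case: ifP => _.
  by rewrite card_mult // leq_divM.
by rewrite muln1 card_ord.
Qed.

Lemma coprime_count :
  m ^ d <= 4 * #|[set f : {ffun 'I_d -> 'I_m} | coprime (f i0).+1 (f i1).+1]|.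
Proof.
set C := [set f | _].
have HC : #|C| + #|~: C| = m ^ d by rewrite cardsC card_ffun !card_ord.
have HS : #|~: C| <= \sum_(k < m.+1) (if 1 < k then #|Tk k| else 0).
  have -> : \sum_(k < m.+1) (if 1 < k then #|Tk k| else 0) =
     \sum_(k < m.+1) \sum_f (if 1 < k then (f \in Tk k) : nat else 0).
    apply: eq_bigr => k _; case: ifP => _; last by rewrite big1.
    by rewrite -sum1_card big_mkcond /=; apply: eq_bigr => f _; case: (f \in Tk k).
  rewrite exchange_big /= -sum1_card big_mkcond /=.
  apply: leq_sum => f _; case: ifP => // fS.
  move: fS; rewrite !inE => nc.
  set a := (f i0).+1 in nc *; set b := (f i1).+1 in nc *.
  set g := gcdn a b.
  have g0 : 0 < g by rewrite gcdn_gt0.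
  have g1 : 1 < g by rewrite ltn_neqAle eq_sym nc g0.
  have gm : g < m.+1 by rewrite ltnS (leq_trans (dvdn_leq _ (dvdn_gcdl a b))) // /a ltn_ord.
  rewrite (bigD1 (Ordinal gm)) //= g1 inE dvdn_gcdl dvdn_gcdr /=.
  by rewrite leq_addr.
have := @tele2 (fun k => #|Tk k|) (m ^ d) m (fun k k1 => cardT k (ltnW k1)).
lia.
Qed.
End Count.


Lemma INR_expn m d : INR (m ^ d) = (INR m ^ d)%R.
Proof. elim: d => [|d IH]; first by rewrite expn0. by rewrite expnS mult_INR IH. Qed.

Lemma real_part (p d m C : nat) : (0 < m)%N -> (0 < d)%N -> (2 <= p)%N ->
  (p <= 4 * d * m * m)%N -> (m ^ d <= 4 * C)%N ->
  (Rpower (INR (4 * d)) (- (INR d / 2)) / 8 * Rpower (INR p) ((INR d + 2) / 2)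
    <= INR ((p - 1) * C))%R.
Proof.
move=> m0 d0 p2 Hp HC.
have Rp : (0 < INR p)%R by apply: lt_0_INR; apply/ltP; lia.
have Rd : (0 < INR (4 * d))%R by apply: lt_0_INR; apply/ltP; lia.
have Rm : (0 < INR m)%R by apply: lt_0_INR; apply/ltP; lia.
have E1 : Rpower (INR p) ((INR d + 2) / 2) = (INR p * Rpower (INR p) (INR d / 2))%R.
  rewrite -{2}(Rpower_1 _ Rp) -Rpower_plus; f_equal; field.
have E2 : (Rpower (INR (4 * d)) (- (INR d / 2)) * Rpower (INR p) (INR d / 2))%R
   = Rpower (INR p / INR (4 * d)) (INR d / 2).
  rewrite /Rpower -exp_plus /Rdiv ln_mult //; last by apply: Rinv_0_lt_compat.
  rewrite ln_Rinv //; f_equal; ring.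
have E3 : (Rpower (INR p / INR (4 * d)) (INR d / 2) <= INR m ^ d)%R.
  have -> : (INR m ^ d = Rpower (INR m ^ 2) (INR d / 2))%R.
    rewrite -(Rpower_pow 2 _ Rm) -(Rpower_pow d _ Rm) Rpower_mult; f_equal; simpl; field.
  apply: Rle_Rpower_l.
    apply: Rmult_le_pos; [apply: pos_INR | lra].
  split; first by apply: Rdiv_lt_0_compat.
  apply: (Rmult_le_reg_r (INR (4 * d))) => //.
  rewrite /Rdiv Rmult_assoc Rinv_l ?Rmult_1_r; last lra.
  have : (INR p <= INR (4 * d * m * m))%R by apply: le_INR; apply/leP.
  rewrite !mult_INR; simpl; nra.
have HC' : (INR m ^ d <= 4 * INR C)%R.
  rewrite -INR_expn. have := le_INR _ _ (leP HC). rewrite mult_INR. simpl. lra.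
have Hp1 : (INR p <= 2 * INR (p - 1))%R.
  have := le_INR _ _ (leP (_ : (p <= 2 * (p - 1))%N)). rewrite mult_INR /=. apply. lia.
rewrite [INR ((p - 1) * C)]mult_INR E1.
have Hpow : (0 <= Rpower (INR p / INR (4 * d)) (INR d / 2))%R by rewrite /Rpower; apply: Rlt_le; apply: exp_pos.
have HmP : (0 <= INR m ^ d)%R by apply: pow_le; lra.
have HCp : (0 <= INR C)%R by apply: pos_INR.
have Hpp : (0 <= INR (p-1))%R by apply: pos_INR.
have : (Rpower (INR (4 * d)) (- (INR d / 2)) / 8 * (INR p * Rpower (INR p) (INR d / 2)) =
   INR p / 8 * Rpower (INR p / INR (4 * d)) (INR d / 2))%R.
  rewrite -E2. field.
move=> ->.
nra.
Qed.


From mathcomp Require Import ring.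
Section Main.
Variables (p d m : nat).
Hypothesis pp : prime p.
Hypothesis dm : (d * m * m < p)%N.
Local Open Scope ring_scope.

Definition vec (l : 'F_p) (f : {ffun 'I_d -> 'I_m}) : 'rV['F_p]_d :=
  \row_i (l * ((f i).+1)%:R).

Lemma dot_vec l l' f g : dotp (vec l f) (vec l' g) =
   l * l' * ((\sum_i ((f i).+1 * (g i).+1))%N)%:R.
Proof.
rewrite /dotp natr_sum mulr_sumr; apply: eq_bigr => i _.
by rewrite !mxE natrM mulrACA.
Qed.

Lemma natFp_neq0 n : (0 < n < p)%N -> (n%:R : 'F_p) != 0.
Proof.
move=> /andP [n0 np]; apply/eqP => H.
have := congr1 (@nat_of_ord _) H; rewrite val_Fp_nat // modn_small //= => E.
by rewrite E in n0.
Qed.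

Lemma natFp_inj a b : (a < p)%N -> (b < p)%N -> (a%:R : 'F_p) = b%:R -> a = b.
Proof.
move=> ap bp H; have := congr1 (@nat_of_ord _) H; rewrite !val_Fp_nat // !modn_small //.
Qed.

Lemma sum_bound (f g : {ffun 'I_d -> 'I_m}) : (0 < d)%N ->
  (0 < \sum_i ((f i).+1 * (g i).+1) < p)%N.
Proof.
move=> d0; apply/andP; split.
  rewrite (bigD1 (Ordinal d0)) //; lia.
apply: leq_ltn_trans dm.
have -> : (d * m * m = \sum_(i < d) (m * m))%N by rewrite sum_nat_const card_ord mulnA.
apply: leq_sum => i _; apply: leq_mul; exact: ltn_ord.
Qed.

Lemma vec_inj (i0 i1 : 'I_d) (l l' : 'F_p) (f g : {ffun 'I_d -> 'I_m}) : l != 0 -> l' != 0 ->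
  coprime (f i0).+1 (f i1).+1 -> coprime (g i0).+1 (g i1).+1 ->
  vec l f = vec l' g -> l = l' /\ f = g.
Proof.
move=> l0 l'0 cf cg E.
have Ei : forall i, l * ((f i).+1)%:R = l' * ((g i).+1)%:R.
  by move=> i; have := congr1 (fun M : 'rV_d => M ord0 i) E; rewrite /= !mxE.
have mp : (m * m < p)%N.
  apply: leq_ltn_trans dm. rewrite -mulnA leq_pmull //; exact: (leq_ltn_trans (leq0n _) (ltn_ord i0)).
have Ecross : forall i j, ((f i).+1 * (g j).+1 = (f j).+1 * (g i).+1)%N.
  move=> i j; apply: natFp_inj.
  - apply: leq_ltn_trans mp; apply: leq_mul; exact: ltn_ord.
  - apply: leq_ltn_trans mp; apply: leq_mul; exact: ltn_ord.
  apply: (mulfI (mulf_neq0 l0 l'0)); rewrite !natrM.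
  have := Ei i; have := Ei j => Hj Hi.
  transitivity ((l * ((f i).+1)%:R) * (l' * ((g j).+1)%:R)); first by ring.
  rewrite Hi -Hj; ring.
have E0 : (f i0).+1 = (g i0).+1.
  have H := Ecross i0 i1.
  apply/eqP; rewrite eqn_dvd; apply/andP; split.
    by rewrite -(Gauss_dvdr _ cf) -H dvdn_mulr.
  by rewrite -(Gauss_dvdr _ cg) mulnC H dvdn_mull.
have Efg : f = g.
  apply/ffunP => i; apply: val_inj => /=.
  have H := Ecross i0 i. rewrite E0 mulnC in H.
  by move/eqP: H; rewrite eqn_pmul2r // => /eqP [].
split => //.
have a0 : (((f i0).+1)%:R : 'F_p) != 0.
  apply: natFp_neq0; rewrite ltn0Sn /=; apply: leq_ltn_trans mp.
  rewrite -[(f i0).+1]muln1; apply: leq_mul; first exact: ltn_ord.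
  exact: (leq_ltn_trans (leq0n _) (ltn_ord (f i0))).
apply: (mulIf a0).
by rewrite Ei Efg.
Qed.
End Main.

Theorem theorem2p4 :
  forall d : nat, (2 <= d)%N ->
  exists c : R, (0 < c)%R /\
  exists p0 : nat, forall p : nat, prime p -> (p0 <= p)%N ->
  exists B : {set 'rV['F_p]_d},
    (c * Rpower (INR p) ((INR d + 2) / 2) <= INR #|B|)%R /\
    (forall x y, x \in B -> y \in B -> dotp x y != GRing.zero).
Proof.
move=> d d2.
exists (Rpower (INR (4 * d)) (- (INR d / 2)) / 8)%R; split.
  apply: Rdiv_lt_0_compat; [rewrite /Rpower; apply: exp_pos | lra].
exists d.+1 => p pp dp.
have d0 : (0 < d)%N by apply: leq_trans d2.
have [m [m0 [Hdm Hpm]]] := @sqrt_lem p d d0 dp.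
pose i0 : 'I_d := Ordinal d0.
pose i1 : 'I_d := Ordinal d2.
have i01 : i0 != i1 by [].
set C := [set f : {ffun 'I_d -> 'I_m} | coprime (f i0).+1 (f i1).+1].
exists [set @vec p d m x.1 x.2 | x in setX [set~ (GRing.zero : 'F_p)] C].
have Hcard : #|[set @vec p d m x.1 x.2 | x in setX [set~ (GRing.zero : 'F_p)] C]| = ((p-1) * #|C|)%N.
  rewrite card_in_imset; first by rewrite cardsX cardsC1 card_Fp // subn1.
  move=> [l f] [l' g] /setXP [/= Hl Hf] /setXP [/= Hl' Hg] /= E.
  rewrite !inE in Hl Hl' Hf Hg.
  by have [-> ->] := @vec_inj p d m pp Hdm i0 i1 l l' f g Hl Hl' Hf Hg E.
split.
  rewrite Hcard; apply: (@real_part p d m) => //.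
  - by apply: leq_trans dp.
  - exact: (@coprime_count d m i0 i1 i01).
move=> x y /imsetP [[l f] /setXP [/= Hl Hf] ->] /imsetP [[l' g] /setXP [/= Hl' Hg] ->].
rewrite dot_vec; rewrite !inE in Hl Hl'.
by rewrite !mulf_neq0 // (natFp_neq0 _ pp) // (sum_bound _ _ _ Hdm).
Qed.
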